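(* Fix an integer base $B\ge 2$ and an integer $k\ge 0$. Assume Dickson's conjecture holds. Then for every positive integer $t$ there exists a positive integer $N$ such that $N, N+1, \ldots, N+t-1$ are all $k$-frugal.
   Context: For a positive integer $n$, $\delta(n)$ is the number of digits of $n$ in base $B$, i.e. $\delta(n)=k$ iff $B^{k-1}\le n<B^k$. Define $\delta'(1)=0$ and $\delta'(a)=\delta(a)$ for $a>1$. If $n=\prod_{i} p_i^{a_i}$ is the prime power factorisation, set $\phi(n)=\sum_i \big(\delta(p_i)+\delta'(a_i)\big)$ (with $\phi(1)=0$), and $h(n)=\delta(n)-\phi(n)$. A positive integer $n$ is $k$-frugal if $h(n)\ge k$ (for $k=0$ this means economical). Dickson's conjecture: for any finite family of linear functions $f_i(x)=a_i x+b_i$ ($i=1,\dots,s$) with integers $a_i\ge1$, $b_i$, if there is no integer $m>1$ dividing $f_1(x)f_2(x)\cdots f_s(x)$ for every integer $x$, then there are infinitely many positive integers $x$ for which $f_1(x),\dots,f_s(x)$ are all prime. *)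

(* Defs.v *)
From mathcomp Require Import all_boot all_order all_algebra.
Set Implicit Arguments. Unset Strict Implicit. Unset Printing Implicit Defensive.
Import Order.TTheory GRing.Theory Num.Theory.

(* delta B n : number of digits of n >= 1 in base B, i.e. the k with
   B^(k-1) <= n < B^k.  trunc_log B n is the largest e with B^e <= n. *)
Definition delta (B n : nat) : nat := (trunc_log B n).+1.

Definition delta' (B a : nat) : nat := if a == 1 then 0 else delta B a.

Definition phi (B n : nat) : nat :=
  \sum_(pa <- prime_decomp n) (delta B pa.1 + delta' B pa.2).

Definition h (B n : nat) : int := (delta B n)%:Z - (phi B n)%:Z.

Definition frugal (B k n : nat) : Prop := 0 < n /\ (k%:Z <= h B n)%R.

Definition intprime (z : int) : bool := (0 < z)%R && prime `|z|%N.

Definition Dickson : Prop :=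
  forall fs : seq (int * int),
    all (fun ab => (1 <= ab.1)%R) fs ->
    ~ (exists m : int, (1 < m)%R /\
         forall x : int, (m %| (\prod_(ab <- fs) (ab.1 * x + ab.2))%R)%Z) ->
    forall M : int, exists x : int, (M < x)%R /\ (0 < x)%R /\
      all (fun ab => intprime (ab.1 * x + ab.2)%R) fs.

(* Main.v *)
Require Import Defs.
From mathcomp Require Import all_boot all_order all_algebra.
From mathcomp Require Import zify.
Set Implicit Arguments. Unset Strict Implicit. Unset Printing Implicit Defensive.
Import Order.TTheory GRing.Theory Num.Theory.

Lemma phiE B n : phi B n = \sum_(p <- primes n) (delta B p + delta' B (logn p n)).
Proof. by rewrite /phi prime_decompE big_map. Qed.

Lemma phi_mulpp B a q e : 0 < a -> prime q -> ~~ (q %| a) -> 0 < e ->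
  phi B (a * q ^ e) = phi B a + delta B q + delta' B e.
Proof.
move=> a0 pq nqa e0.
have q0 : 0 < q by exact: prime_gt0.
have qe0 : 0 < q ^ e by rewrite expn_gt0 q0.
rewrite !phiE.
have qna : q \notin primes a by rewrite mem_primes pq a0 nqa.
have Hp : perm_eq (primes (a * q ^ e)) (q :: primes a).
  apply: uniq_perm; first exact: primes_uniq.
    by rewrite /= qna primes_uniq.
  move=> p; rewrite primesM // primesX // (primes_prime pq) !inE orbC.
  by rewrite orbC.
have lqa : logn q a = 0.
  by apply/eqP; rewrite -leqn0 leqNgt logn_gt0.
have E : \sum_(j <- primes a) (delta B j + delta' B (logn j (a * q ^ e)))
   = \sum_(p <- primes a) (delta B p + delta' B (logn p a)).
  apply: eq_big_seq => p pin.
  rewrite lognM // lognX (logn_prime _ pq).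
  have -> : (p == q) = false.
    by apply/negbTE; apply: contraNneq qna => <-.
  by rewrite muln0 addn0.
rewrite (perm_big _ Hp) big_cons E.
rewrite lognM // lognX (logn_prime _ pq) eqxx muln1 lqa add0n.
rewrite /=; lia.
Qed.

Lemma phi_prime B p : prime p -> phi B p = delta B p.
Proof.
move=> pp.
have np1 : ~~ (p %| 1) by rewrite dvdn1; apply/eqP => p1; move: pp; rewrite p1.
have := @phi_mulpp B 1 p 1 isT pp np1 isT.
rewrite expn1 mul1n => ->.
have -> : phi B 1 = 0 by rewrite phiE (_ : primes 1 = [::]) // big_nil.
by rewrite /delta' /= addn0.
Qed.

Lemma tl_mul B a b : 1 < B -> 0 < a -> 0 < b ->
  trunc_log B a + trunc_log B b <= trunc_log B (a * b).
Proof.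
move=> B1 a0 b0; apply: trunc_log_max => //.
by rewrite expnD leq_mul // trunc_logP.
Qed.

Lemma two_pow n : n.*2 <= 2 ^ n.
Proof.
elim: n => [//|n IH]; rewrite expnS doubleS.
case: n IH => [//|n] IH.
have : 2 <= 2 ^ n.+1 by rewrite -{1}(expn1 2) leq_exp2l.
rewrite /=; lia.
Qed.

Lemma frugal_step B k c p : 1 < B -> 0 < c -> prime p -> ~~ (p %| c) ->
  k.+1 + phi B c <= delta B c -> k + phi B (c * p) <= delta B (c * p).
Proof.
move=> B1 c0 pp npc H.
have := @phi_mulpp B c p 1 c0 pp npc isT; rewrite expn1 => ->.
have := tl_mul B1 c0 (prime_gt0 pp).
move: H; rewrite /delta /delta' /=; lia.
Qed.

Lemma c_frugal B k i q : 1 < B -> 0 < i -> prime q -> B <= q -> ~~ (q %| i) ->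
  k.+1 + phi B (i * q ^ (B ^ (phi B i + delta B q + k + 1)))
  <= delta B (i * q ^ (B ^ (phi B i + delta B q + k + 1))).
Proof.
move=> B1 i0 pq Bq nqi.
set X := phi B i + delta B q + k + 1.
have E0 : 0 < B ^ X by rewrite expn_gt0; lia.
rewrite phi_mulpp //.
have h1 : delta' B (B ^ X) <= X.+1.
  rewrite /delta' /delta trunc_expnK //; by case: ifP.
have h2 : (B ^ X).+1 <= delta B (i * q ^ B ^ X).
  rewrite /delta ltnS; apply: trunc_log_max => //.
  apply: (@leq_trans (q ^ B ^ X)); first by rewrite leq_exp2r.
  by rewrite leq_pmull.
have h3 : X.*2 <= B ^ X.
  apply: leq_trans (two_pow X) _; rewrite leq_exp2r //; lia.
rewrite /X in h1 h2 h3 *; lia.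
Qed.

Lemma cop_prod (m : nat -> nat) n y :
  (forall j, j < n -> coprime (m j) y) -> coprime (\prod_(j < n) m j) y.
Proof.
elim: n => [|n IH] H; first by rewrite big_ord0 coprime1n.
rewrite big_ord_recr /= coprimeMl IH ?H //.
by move=> j jn; apply: H; apply: ltnW.
Qed.

Lemma dvd_prod (m : nat -> nat) n j : j < n -> m j %| \prod_(i < n) m i.
Proof.
elim: n => [//|n IH] jn; rewrite big_ord_recr /=.
case: (ltnP j n) => jn'.
  by apply: dvdn_mulr; apply: IH.
have -> : j = n by lia.
exact: dvdn_mull.
Qed.

Lemma crt (m r : nat -> nat) n :
  (forall i j, i < j -> j < n -> coprime (m i) (m j)) ->
  exists x, forall i, i < n -> x = r i %[mod m i].
Proof.
elim: n => [|n IH] H; first by exists 0.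
have [x Hx] : exists x, forall i, i < n -> x = r i %[mod m i].
  by apply: IH => i j ij jn; apply: H => //; apply: ltnW.
have cP : coprime (\prod_(j < n) m j) (m n).
  by apply: cop_prod => j jn; apply: H.
exists (chinese (\prod_(j < n) m j) (m n) x (r n)) => i; rewrite ltnS leq_eqVlt.
case/orP=> [/eqP -> | iin]; first exact: chinese_modr.
rewrite -(Hx i iin).
have dP := dvd_prod m iin.
by rewrite -(modn_dvdm _ dP) chinese_modl // (modn_dvdm _ dP).
Qed.

Lemma root_uniq p a b x y : prime p -> ~~ (p %| a) -> x < p -> y < p ->
  p %| a * x + b -> p %| a * y + b -> x = y.
Proof.
move=> pp npa.
wlog xy : x y / x <= y.
  move=> W xp yp hx hy; case: (leqP x y) => h; first exact: W.
  by symmetry; apply: W => //; apply: ltnW.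
move=> xp yp hx hy.
have axy : a * x <= a * y by rewrite leq_mul2l xy orbT.
have e : a * y + b = (a * x + b) + a * (y - x) by rewrite mulnBr; lia.
move: hy; rewrite e dvdn_addr // Euclid_dvdM // (negbTE npa) /= => hd.
case: (posnP (y - x)) => h0; first lia.
have := dvdn_leq h0 hd; lia.
Qed.

Lemma adm t (A d : nat -> nat) p : prime p ->
  (p <= t -> forall i, 0 < i <= t -> ~~ (p %| d i)) ->
  (t < p -> forall i, 0 < i <= t -> p %| A i -> ~~ (p %| d i)) ->
  exists x, ~~ (p %| \prod_(i <- iota 1 t) (A i * x + d i)).
Proof.
move=> pp H1 H2.
case: (leqP p t) => pt.
  exists 0; rewrite Euclid_dvd_prod // big_has; apply/hasPn => i.
  rewrite mem_iota muln0 add0n => hi; apply: H1 => //; lia.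
case: (boolP [exists x : 'I_t.+1, ~~ (p %| \prod_(i <- iota 1 t) (A i * x + d i))]).
  by case/existsP => x hx; exists x.
rewrite negb_exists => /forallP H.
case: t pt H1 H2 H => [|t] pt H1 H2 H.
  by have := H ord0; rewrite negbK big_nil dvdn1 => /eqP p1; move: pp; rewrite p1.
have Hx : forall x : 'I_t.+2, exists i : 'I_t.+1, p %| A i.+1 * x + d i.+1.
  move=> x; have := H x; rewrite negbK Euclid_dvd_prod // big_has => /hasP [i].
  rewrite mem_iota => hi hd.
  have hi' : i.-1 < t.+1 by lia.
  exists (Ordinal hi'); rewrite /= prednK //; lia.
pose g (x : 'I_t.+2) : 'I_t.+1 :=
  odflt ord0 [pick i : 'I_t.+1 | p %| A i.+1 * x + d i.+1].
have Hg : forall x, p %| A (g x).+1 * x + d (g x).+1.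
  move=> x; rewrite /g; case: pickP => [i //|].
  by case: (Hx x) => i hi /(_ i); rewrite hi.
have ginj : injective g.
  move=> x y gxy; apply: val_inj => /=.
  have := Hg x; have := Hg y; rewrite -gxy => hy hx.
  have hj : 0 < (g x).+1 <= t.+1 by rewrite ltn_ord.
  have npa : ~~ (p %| A (g x).+1).
    apply/negP => hpa; have := H2 pt _ hj hpa.
    by move: hx; rewrite dvdn_addr ?dvdn_mulr // => ->.
  apply: (root_uniq pp npa) hx hy.
    by apply: leq_trans (ltn_ord x) pt.
  by apply: leq_trans (ltn_ord y) pt.
by have := leq_card g ginj; rewrite !card_ord ltnn.
Qed.

Lemma prime_dvd_fact p n : prime p -> p %| n`! -> p <= n.
Proof.
move=> pp; elim: n => [|n IH]; first by rewrite dvdn1 => /eqP p1; move: pp; rewrite p1.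
rewrite factS Euclid_dvdM // => /orP [h|h].
  exact: dvdn_leq h.
by apply: leq_trans (IH h) _.
Qed.

Lemma prime_dvd_prod_ord p (m : nat -> nat) n : prime p ->
  p %| \prod_(j < n) m j -> exists2 j, j < n & p %| m j.
Proof.
move=> pp; elim: n => [|n IH]; first by rewrite big_ord0 dvdn1 => /eqP p1; move: pp; rewrite p1.
rewrite big_ord_recr /= Euclid_dvdM // => /orP [h|h].
  by case: (IH h) => j jn hj; exists j => //; apply: ltnW.
by exists n.
Qed.

Fixpoint qseq (T i : nat) : nat :=
  match i with 0 => sval (prime_above T) | i'.+1 => sval (prime_above (qseq T i')) end.

Lemma qseq_prime T i : prime (qseq T i).
Proof. by case: i => [|i] /=; case: prime_above. Qed.

Lemma qseq_step T i : qseq T i < qseq T i.+1.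
Proof. by rewrite /=; case: prime_above. Qed.

Lemma qseq_gt T i : T < qseq T i.
Proof.
elim: i => [|i IH]; first by rewrite /=; case: prime_above.
exact: ltn_trans IH (qseq_step T i).
Qed.

Lemma qseq_mono T i j : i < j -> qseq T i < qseq T j.
Proof.
elim: j => [//|j IH]; rewrite ltnS leq_eqVlt => /orP [/eqP ->|h].
  exact: qseq_step.
exact: ltn_trans (IH h) (qseq_step T j).
Qed.

Lemma prod_posz (s : seq nat) (f : nat -> nat) :
  (\prod_(i <- s) Posz (f i))%R = Posz (\prod_(i <- s) f i).
Proof. by elim: s => [|a s IH]; rewrite ?big_nil ?big_cons // IH PoszM. Qed.

Lemma leq_sum_ord (f : nat -> nat) n j : j < n -> f j <= \sum_(i < n) f i.
Proof.
elim: n => [//|n IH] jn; rewrite big_ord_recr /=.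
case: (ltnP j n) => jn'; first by apply: leq_trans (IH jn') (leq_addr _ _).
have -> : j = n by lia.
exact: leq_addl.
Qed.
Theorem mainTheorem5 (B k : nat) (hB : 2 <= B) :
  Dickson ->
  forall t : nat, 0 < t ->
    exists N : nat, 0 < N /\ forall i : nat, i < t -> frugal B k (N + i).
Proof.
move=> HD t t0.
pose T := t + B.
pose q i := qseq T i.
pose E i := B ^ (phi B i + delta B (q i) + k + 1).
pose c i := i * q i ^ E i.
pose F := t`! * t`!.
pose m i := if i == 0 then F else q i ^ (E i).+1.
pose r i := if i == 0 then 0 else q i ^ (E i).+1 * i + q i ^ E i - i.
have qP i : prime (q i) by exact: qseq_prime.
have qT i : T < q i by exact: qseq_gt.
have q0 i : 0 < q i := prime_gt0 (qP i).
have E0 i : 0 < E i by rewrite expn_gt0; lia.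
have cop_m : forall i j, i < j -> j < t.+1 -> coprime (m i) (m j).
  move=> i j ij jt; rewrite /m.
  have -> : (j == 0) = false by case: j ij jt.
  case: ifP => i0.
    apply: coprimeXr; rewrite coprimeMl andbb coprime_sym prime_coprime //.
    apply/negP => /(prime_dvd_fact (qP j)) h; have := qT j; rewrite /T; lia.
  apply: coprimeXl; apply: coprimeXr; rewrite prime_coprime // dvdn_prime2 //.
  have := qseq_mono T ij; rewrite -/(q i) -/(q j) => h.
  by apply/eqP => e; rewrite e ltnn in h.
have [N0 HN0] := @crt m r t.+1 cop_m.
pose M := \prod_(i < t.+1) m i.
have hF : F %| N0.
  have := HN0 0 isT; rewrite /m /r /= => h.
  by rewrite /dvdn h mod0n.
have hmi : forall i, 0 < i <= t -> m i = q i ^ (E i).+1.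
  by move=> i hi; rewrite /m; have -> : (i == 0) = false by case: i hi.
have hmod : forall i, 0 < i <= t -> (N0 + i) %% q i ^ (E i).+1 = q i ^ E i.
  move=> i hi; have := HN0 i (ltac:(lia)); rewrite hmi // /r.
  have -> : (i == 0) = false by case: i hi.
  move=> h; rewrite -modnDml h modnDml.
  have h1 : i <= q i ^ (E i).+1 * i by rewrite leq_pmull // expn_gt0 q0.
  have -> : q i ^ (E i).+1 * i + q i ^ E i - i + i = i * q i ^ (E i).+1 + q i ^ E i.
    by rewrite [i * _]mulnC; lia.
  by rewrite modnMDl modn_small // ltn_exp2l // prime_gt1.
have hqE : forall i, 0 < i <= t -> q i ^ E i %| N0 + i.
  move=> i hi; rewrite (divn_eq (N0 + i) (q i ^ (E i).+1)) hmod //.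
  by apply: dvdn_add => //; apply: dvdn_mull; rewrite expnS dvdn_mull.
have hic : forall i, 0 < i <= t -> i %| F.
  by move=> i hi; apply: dvdn_mulr; apply: dvdn_fact.
have nqi : forall i, 0 < i <= t -> ~~ (q i %| i).
  move=> i hi; have i0 : 0 < i by case/andP: hi.
  apply/negP => /(dvdn_leq i0); have := qT i; rewrite /T; lia.
have hcd : forall i, 0 < i <= t -> c i %| N0 + i.
  move=> i hi; rewrite /c Gauss_dvd; last first.
    by apply: coprimeXr; rewrite coprime_sym prime_coprime // nqi.
  rewrite hqE // andbT; apply: dvdn_add; last exact: dvdnn.
  exact: dvdn_trans (hic i hi) hF.
have hm0 : forall i, 0 < m i.
  move=> i; rewrite /m; case: ifP => _; last by rewrite expn_gt0 q0.
  by rewrite muln_gt0 fact_gt0.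
have hM0 : 0 < M by apply: prodn_gt0.
have hcM : forall i, 0 < i <= t -> c i %| M.
  move=> i hi.
  have hFm : F * m i %| M.
    rewrite Gauss_dvd; last by have := cop_m 0 i (ltac:(lia)) (ltac:(lia)).
    have := @dvd_prod m t.+1 0 isT; have := @dvd_prod m t.+1 i (ltac:(lia)).
    by rewrite -/M /m /= => -> ->.
  apply: dvdn_trans hFm; rewrite /c hmi //; apply: dvdn_mul; first exact: hic.
  by rewrite expnS dvdn_mull.
have hc0 : forall i, 0 < i -> 0 < c i by move=> i i0; rewrite /c muln_gt0 i0 expn_gt0 q0.
pose A i := M %/ c i.
pose d i := (N0 + i) %/ c i.
have hA : forall i, 0 < i <= t -> M = A i * c i by move=> i hi; rewrite divnK // hcM.
have hd : forall i, 0 < i <= t -> N0 + i = d i * c i by move=> i hi; rewrite divnK // hcd.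
have hA0 : forall i, 0 < i <= t -> 0 < A i.
  by move=> i hi; have := hM0; rewrite (hA i hi) muln_gt0 => /andP [].
have H1 : forall p, prime p -> p <= t -> forall i, 0 < i <= t -> ~~ (p %| d i).
  move=> p pp pt i hi; apply/negP => hp.
  have i0 : 0 < i by case/andP: hi.
  have h1 : i * p %| N0 + i.
    rewrite (hd i hi) /c.
    have -> : d i * (i * q i ^ E i) = (i * d i) * q i ^ E i.
      by rewrite mulnCA mulnA.
    by apply: dvdn_mulr; apply: dvdn_mul.
  have h2 : i * p %| N0.
    apply: dvdn_trans hF; apply: dvdn_mul; first by apply: dvdn_fact.
    by apply: dvdn_fact; rewrite prime_gt0.
  move: h1; rewrite dvdn_addr // -{2}(muln1 i) dvdn_pmul2l // dvdn1 => /eqP p1.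
  by move: pp; rewrite p1.
have H2 : forall p, prime p -> t < p -> forall i, 0 < i <= t -> p %| A i -> ~~ (p %| d i).
  move=> p pp pt i hi hpA; apply/negP => hp.
  have hpM : p %| M by rewrite (hA i hi); apply: dvdn_mulr.
  have [j jt hj] := prime_dvd_prod_ord pp hpM.
  case: (posnP j) => j0.
    move: hj; rewrite j0 /m /= Euclid_dvdM // orbb => /(prime_dvd_fact pp); lia.
  have hjt : 0 < j <= t by lia.
  move: hj; rewrite hmi // Euclid_dvdX // andbT dvdn_prime2 // => /eqP pq.
  have hdi : d i %| N0 + i by rewrite (hd i hi) dvdn_mulr.
  case: (eqVneq j i) => [ji | nji].
    have : q i ^ (E i).+1 %| N0 + i.
      rewrite (hd i hi) /c expnS; apply: dvdn_mul; first by move: hp; rewrite pq ji.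
      exact: dvdn_mull.
    by rewrite /dvdn hmod // -leqn0 leqNgt expn_gt0 q0.
  have hqi : q j %| N0 + i by rewrite -pq; apply: dvdn_trans hdi.
  have hqj : q j %| N0 + j.
    apply: dvdn_trans (hqE j hjt); rewrite -{1}(expn1 (q j)); apply: dvdn_exp2l.
    exact: E0.
  have qjt := qT j; rewrite /T in qjt.
  have hjt' : j <= t by case/andP: hjt.
  have hit' : i <= t by case/andP: hi.
  case: (ltnP i j) => ij.
    have e : N0 + j = (N0 + i) + (j - i) by rewrite -addnA subnKC // ltnW.
    have hji : 0 < j - i by rewrite subn_gt0.
    move: hqj; rewrite e dvdn_addr // => /(dvdn_leq hji) h.
    have : q j <= t + B := leq_trans h (leq_trans (leq_subr i j) (leq_trans hjt' (leq_addr B t))).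
    by rewrite leqNgt qjt.
  have ij' : j < i by rewrite ltn_neqAle nji ij.
  have e : N0 + i = (N0 + j) + (i - j) by rewrite -addnA subnKC // ltnW.
  have hji : 0 < i - j by rewrite subn_gt0.
  move: hqi; rewrite e dvdn_addr // => /(dvdn_leq hji) h.
  have : q j <= t + B := leq_trans h (leq_trans (leq_subr j i) (leq_trans hit' (leq_addr B t))).
  by rewrite leqNgt qjt.
pose fs := [seq (Posz (A i), Posz (d i)) | i <- iota 1 t].
have hall : all (fun ab => (1 <= ab.1)%R) fs.
  rewrite all_map; apply/allP => i; rewrite mem_iota => hi /=.
  rewrite lez_nat; apply: hA0; lia.
pose M0 := \sum_(i < t.+1) c i.
case: (HD fs hall _ (Posz M0)) => [|x [hx1 [hx0 hxp]]].
  case=> z [z1 Hz].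
  case: z z1 Hz => [n|n] //; rewrite ltz_nat => n1 Hz.
  have pp := pdiv_prime n1.
  have [x hx] := @adm t A d _ pp (H1 _ pp) (H2 _ pp).
  have := Hz (Posz x); rewrite dvdzE big_map.
  under eq_bigr => i _ do rewrite -PoszM -PoszD.
  rewrite prod_posz /= => hn.
  by move: hx; rewrite (dvdn_trans (pdiv_dvd n) hn).
case: x hx1 hx0 hxp => [n|n] // hn1 _ hnp.
move: hn1; rewrite ltz_nat => hn1.
exists (M * n + N0 + 1); split; first lia.
move=> i' it; pose i := i'.+1.
have hi : 0 < i <= t by rewrite /i; lia.
have e : M * n + N0 + 1 + i' = c i * (A i * n + d i).
  rewrite mulnDr [c i * _]mulnC -mulnA [c i * d i]mulnC -(hd i hi).
  rewrite [n * c i]mulnC mulnA -(hA i hi) /i; lia.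
rewrite e.
have pp : prime (A i * n + d i).
  move/allP: hnp => /(_ (Posz (A i), Posz (d i))).
  rewrite map_f ?mem_iota /=; last by rewrite /i; lia.
  by rewrite /intprime -PoszM -PoszD /= => /(_ isT) /andP [].
have hcM0 : c i <= M0 by apply: leq_sum_ord; rewrite /i; lia.
have npc : ~~ (A i * n + d i %| c i).
  apply/negP => /(dvdn_leq (hc0 i (ltn0Sn _))).
  have : n <= A i * n by rewrite leq_pmull // hA0.
  lia.
have cf := c_frugal k hB (ltn0Sn i') (qP i) (leq_trans (leq_addl t B) (ltnW (qT i))) (nqi i hi).
have := frugal_step hB (hc0 i (ltn0Sn _)) pp npc cf.
rewrite /frugal /h => H; split.
  by rewrite muln_gt0 (hc0 i (ltn0Sn i')) prime_gt0.
lia.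
Qed.
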